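(* For any two density operators $\rho$ and $\sigma$ on a finite-dimensional Hilbert space, $\lim_{\alpha\to1}S_{\alpha}(\rho\|\sigma)=U(\rho\|\sigma)$.
   Context: A density operator is a positive semidefinite operator of unit trace; $\operatorname{supp}(\rho)$ is the span of eigenvectors with nonzero eigenvalues. For $\alpha>0$, $\alpha\neq1$, the quantum relative $\alpha$-entropy is $S_{\alpha}(\rho\|\sigma)=\frac{\alpha}{1-\alpha}\log\operatorname{Tr}(\rho\sigma^{\alpha-1})-\frac{1}{1-\alpha}\log\operatorname{Tr}(\rho^{\alpha})+\log\operatorname{Tr}(\sigma^{\alpha})$ if $\operatorname{supp}(\rho)\subseteq\operatorname{supp}(\sigma)$ (negative powers on the support), and $+\infty$ otherwise. Umegaki's relative entropy is $U(\rho\|\sigma)=\operatorname{Tr}(\rho\log\rho-\rho\log\sigma)$ when $\operatorname{supp}(\rho)\subseteq\operatorname{supp}(\sigma)$ and $+\infty$ otherwise. Conventions: $0\cdot(\pm\infty)=0$, $\log0=-\infty$, $\log(+\infty)=+\infty$. *)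

(* Defs.v *)
From HB Require Import structures.
From mathcomp Require Import all_boot all_order all_algebra.
From mathcomp Require Import all_classical all_reals all_analysis.
From mathcomp Require Import complex.
Set Implicit Arguments. Unset Strict Implicit. Unset Printing Implicit Defensive.
Import Order.TTheory GRing.Theory Num.Theory.
Import numFieldNormedType.Exports.
Local Open Scope ring_scope.

Section Quantum.
Variable R : realType.
Local Notation C := R[i].

Definition adj n m (A : 'M[C]_(n, m)) : 'M[C]_(m, n) := (map_mx conjc A)^T.

Definition density n (A : 'M[C]_n) : Prop :=
  [/\ adj A = A,
      (forall v : 'cV[C]_n, 0 <= (adj v *m A *m v) 0 0)
    & \tr A = 1].

Definition eigdec n (A : 'M[C]_n) (Ud : 'M[C]_n * 'rV[R]_n) : Prop :=
  Ud.1 *m adj Ud.1 = 1%:M /\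
  A = Ud.1 *m diag_mx (map_mx (fun x => x%:C%C) Ud.2) *m adj Ud.1.

(* functional calculus f(A) for a Hermitian matrix, via a chosen unitary
   diagonalisation (the result does not depend on the choice) *)
Definition mfun n (f : R -> R) (A : 'M[C]_n) : 'M[C]_n :=
  match pselect (exists Ud, eigdec A Ud) with
  | left h => let Ud := projT1 (cid h) in
      Ud.1 *m diag_mx (map_mx (fun x => (f x)%:C%C) Ud.2) *m adj Ud.1
  | right _ => 0
  end.

Definition mpow n (t : R) (A : 'M[C]_n) : 'M[C]_n :=
  mfun (fun x => if 0 < x then x `^ t else 0) A.

(* log A on the support (0 on the kernel; only used where this is harmless) *)
Definition mlog n (A : 'M[C]_n) : 'M[C]_n :=
  mfun (fun x => if 0 < x then ln x else 0) A.

Definition trR n (A : 'M[C]_n) : R := complex.Re (\tr A).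

(* supp(rho) ⊆ supp(sigma): for Hermitian matrices the support is the
   column/row space *)
Definition supp_incl n (rho sigma : 'M[C]_n) : bool := (rho <= sigma)%MS.

Definition Salpha n (a : R) (rho sigma : 'M[C]_n) : \bar R :=
  if supp_incl rho sigma then
    ((a / (1 - a)) * ln (trR (rho *m mpow (a - 1) sigma))
     - (1 - a)^-1 * ln (trR (mpow a rho))
     + ln (trR (mpow a sigma)))%:E
  else +oo%E.

Definition Umegaki n (rho sigma : 'M[C]_n) : \bar R :=
  if supp_incl rho sigma then
    (trR (rho *m mlog rho - rho *m mlog sigma))%:E
  else +oo%E.

End Quantum.

(* Main.v *)
Require Import Defs.
From HB Require Import structures.
From mathcomp Require Import all_boot all_order all_algebra.
From mathcomp Require Import all_classical all_reals all_analysis.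
From mathcomp Require Import complex.
From mathcomp Require Import spectral sesquilinear ring.
Import Order.TTheory GRing.Theory Num.Theory.
Import numFieldNormedType.Exports.
Set Implicit Arguments. Unset Strict Implicit. Unset Printing Implicit Defensive.
Local Open Scope ring_scope.

Section Helpers.
Variable R : realType.
Local Notation C := R[i].


Lemma adjE n m (A : 'M[C]_(n,m)) : adj A = (A ^t*)%sesqui.
Proof. by rewrite /adj map_trmx. Qed.

Lemma adjM n m p (A : 'M[C]_(n,m)) (B : 'M[C]_(m,p)) : adj (A *m B) = adj B *m adj A.
Proof. by rewrite /adj map_mxM trmx_mul. Qed.

Lemma adjK n m (A : 'M[C]_(n,m)) : adj (adj A) = A.
Proof. by apply/matrixP=> i j; rewrite /adj !mxE conjcK. Qed.

Lemma unitaryC n (U : 'M[C]_n) : U *m adj U = 1%:M -> adj U *m U = 1%:M.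
Proof. exact: mulmx1C. Qed.

Lemma ReD (x y : C) : complex.Re (x + y) = complex.Re x + complex.Re y.
Proof. by case: x; case: y. Qed.

Lemma Re_sum n (F : 'I_n -> C) : complex.Re (\sum_(i < n) F i) = \sum_(i < n) complex.Re (F i).
Proof. by apply: (big_morph _ ReD). Qed.

Lemma ReMR (z : C) (x : R) : complex.Re (z * x%:C%C) = complex.Re z * x.
Proof. by case: z => a b /=; rewrite mulr0 subr0. Qed.

Definition Dg n (f : R -> R) (d : 'rV[R]_n) : 'M[C]_n :=
  diag_mx (map_mx (fun x => (f x)%:C%C) d).

Lemma mfunE n (A : 'M[C]_n) : (exists Ud, eigdec A Ud) ->
  exists Ud, eigdec A Ud /\ forall f, Defs.mfun f A = Ud.1 *m Dg f Ud.2 *m adj Ud.1.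
Proof.
move=> ex; rewrite /Defs.mfun; case: pselect => [h|//].
by exists (projT1 (cid h)); split => //; exact: projT2 (cid h).
Qed.

Lemma eig_diag n (A : 'M[C]_n) U d : eigdec A (U, d) ->
  adj U *m A *m U = Dg id d.
Proof.
move=> [/= UU ->]; have UU' := unitaryC UU.
rewrite !mulmxA UU' mul1mx -mulmxA UU' mulmx1.
by congr diag_mx; apply/matrixP => i j; rewrite !mxE.
Qed.

Lemma diag_entry n (M : 'M[C]_n) j :
  (adj (delta_mx j 0 : 'cV[C]_n) *m M *m (delta_mx j 0 : 'cV[C]_n)) 0 0 = M j j.
Proof.
have -> : adj (delta_mx j 0 : 'cV[C]_n) = delta_mx 0 j.
  apply/matrixP => a b; rewrite /adj !mxE.
  by rewrite conjc_nat andbC.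
by rewrite -(rowE j M) -colE !mxE.
Qed.

Lemma psd_entry n (A : 'M[C]_n) (U : 'M[C]_n) j : density A ->
  0 <= (adj U *m A *m U) j j.
Proof.
move=> [_ psd _]; have := psd (U *m delta_mx j 0).
suff -> : adj (U *m delta_mx j 0) *m A *m (U *m delta_mx j 0) =
  adj (delta_mx j 0 : 'cV[C]_n) *m (adj U *m A *m U) *m (delta_mx j 0 : 'cV[C]_n).
  by rewrite diag_entry.
by rewrite adjM !mulmxA.
Qed.

Lemma density_eigdec n (A : 'M[C]_n) : density A -> exists Ud, eigdec A Ud.
Proof.
move=> dA; have [herm _ _] := dA.
have nA : A \is normalmx by apply/normalmxP; rewrite -adjE herm.
have Puni := spectral_unitarymx A.
move/orthomx_spectralP: nA; rewrite invmx_unitary // -!adjE => Aeq.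
set P := spectralmx A in Aeq Puni; set sp := spectral_diag A in Aeq.
have PP : P *m adj P = 1%:M by rewrite adjE; apply/unitarymxP.
exists (adj P, map_mx (@complex.Re R) sp); split => /=.
  by rewrite adjK; apply: unitaryC.
rewrite adjK {1}Aeq; congr (_ *m _ *m _); congr diag_mx.
apply/matrixP => i j; rewrite !mxE ord1 {i}.
have := psd_entry (adj P) j dA.
rewrite adjK {1}Aeq !mulmxA PP mul1mx -mulmxA PP mulmx1 mxE eqxx mulr1n.
move: (sp 0 j) => z; case: z => a b; rewrite lecE /= => /andP[/eqP -> _]. done.
Qed.

Lemma tr_mfun n (U : 'M[C]_n) d f : U *m adj U = 1%:M ->
  trR (U *m Dg f d *m adj U) = \sum_j f (d 0 j).
Proof.
move=> UU; rewrite /trR mxtrace_mulC mulmxA unitaryC // mul1mx mxtrace_diag Re_sum.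
by apply: eq_bigr => j _; rewrite mxE.
Qed.

Lemma tr_mul_mfun n (A U : 'M[C]_n) d f : U *m adj U = 1%:M ->
  trR (A *m (U *m Dg f d *m adj U)) =
  \sum_j complex.Re ((adj U *m A *m U) j j) * f (d 0 j).
Proof.
move=> UU; rewrite /trR !mulmxA mxtrace_mulC !mulmxA /Dg mul_mx_diag /mxtrace Re_sum.
by apply: eq_bigr => j _; rewrite !mxE ReMR.
Qed.

Lemma supp_zero n (rho sigma V : 'M[C]_n) e j :
  supp_incl rho sigma -> eigdec sigma (V, e) -> e 0 j = 0 ->
  (adj V *m rho *m V) j j = 0.
Proof.
move=> /submxP [X ->] [/= VV ->] ej0.
rewrite !mulmxA -(mulmxA _ (adj V) V) (unitaryC VV) mulmx1.
rewrite mul_mx_diag !mxE ej0 (_ : 0%:C%C = 0) ?mulr0 //.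

Qed.


Local Open Scope classical_set_scope.


Definition pw (t x : R) := if 0 < x then x `^ t else 0.
Definition lg (x : R) := if 0 < x then ln x else 0.

Lemma quot_lim (f : R -> R) (x a : R) : is_derive x 1 f a -> f x = 0 ->
  (fun z => f z / (z - x)) @ x^' --> a.
Proof.
move=> /is_derive1_caratheodory [g [fE cg gx]] fx0.
have : g @ x^' --> a by rewrite -gx; exact: cvg_within_filter.
apply: cvg_trans; apply: near_eq_cvg; near=> z.
rewrite -[f z]subr0 -fx0 fE mulfK //; rewrite subr_eq0.
by near: z; exact: nbhs_dnbhs_neq.
Unshelve. all: by end_near. Qed.

Lemma derive_term (c x s t0 : R) :
  is_derive t0 1 (fun t => c * pw (t - s) x) (c * (lg x * pw (t0 - s) x)).
Proof.
rewrite /pw /lg; case: ifP => x0; last first.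
  rewrite (_ : (fun _ => _) = cst 0); last by apply/funext => t; rewrite mulr0.
  by apply: is_derive_eq; rewrite !mulr0.
have -> : (fun t => c * x `^ (t - s)) = c \*: (expR \o (ln x \*: (@id R - cst s))).
  apply/funext => t; by rewrite /= /powR gt_eqF // !fctE /= [(t - s) * _]mulrC.
apply: is_derive_eq.
rewrite !fctE /= /powR gt_eqF //.
change (c * (expR (ln x * (t0 - s)) * (ln x * (1 - 0))) =
  c * (ln x * expR ((t0 - s) * ln x))).
by rewrite subr0 mulr1 [ln x * (t0 - s)]mulrC [expR _ * _]mulrC.
Qed.


Lemma derive_phi n (c x : 'I_n -> R) (s t0 : R) :
  is_derive t0 1 (fun t => \sum_j c j * pw (t - s) (x j))
    (\sum_j c j * (lg (x j) * pw (t0 - s) (x j))).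
Proof.
rewrite -(fct_sumE _ _ (fun j t => c j * pw (t - s) (x j))).
by apply: is_derive_sum => j; exact: derive_term.
Qed.

Lemma ln_derive (f : R -> R) (x df : R) : is_derive x 1 f df -> f x = 1 ->
  is_derive x 1 (@ln R \o f) df.
Proof.
move=> hf fx1.
have h1 : is_derive (f x) 1 (@ln R) (f x)^-1 by apply: is_derive1_ln; rewrite fx1 ltr01.
by have := is_derive1_comp h1 hf; rewrite fx1 invr1 mul1r.
Qed.

Lemma pw1 x : 0 <= x -> pw 1 x = x.
Proof. by rewrite /pw le_eqVlt => /orP[/eqP <-|x0]; rewrite ?ltxx // x0 powRr1 // ltW. Qed.

Lemma pw0 x : pw 0 x = if 0 < x then 1 else 0.
Proof. by rewrite /pw powRr0. Qed.

Lemma real_limit n (d e w : 'I_n -> R) :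
  (forall i, 0 <= d i) -> \sum_i d i = 1 -> (forall j, 0 <= e j) -> \sum_j e j = 1 ->
  \sum_j w j = 1 -> (forall j, e j = 0 -> w j = 0) ->
  (fun a => a / (1 - a) * ln (\sum_j w j * pw (a - 1) (e j))
           - (1 - a)^-1 * ln (\sum_i pw a (d i))
           + ln (\sum_j pw a (e j))) @ (1 : R)^' -->
  (\sum_i d i * lg (d i) - \sum_j w j * lg (e j)).
Proof.
move=> d0 d1 e0 e1 w1 ew.
pose PF := fun t => \sum_i (fun=> 1) i * pw (t - 0) (d i).
pose PG := fun t => \sum_j w j * pw (t - 1) (e j).
pose PH := fun t => \sum_i (fun=> 1) i * pw (t - 0) (e i).
have hF := derive_phi (fun=> 1) d 0 1.
have hG := derive_phi w e 1 1.
have hH := derive_phi (fun=> 1) e 0 1.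
have PF1 : PF 1 = 1.
  by rewrite /PF -[in RHS]d1; apply: eq_bigr => i _; rewrite /= subr0 mul1r pw1.
have PH1 : PH 1 = 1.
  by rewrite /PH -[in RHS]e1; apply: eq_bigr => i _; rewrite /= subr0 mul1r pw1.
have PG1 : PG 1 = 1.
  rewrite /PG -[in RHS]w1; apply: eq_bigr => j _; rewrite subrr pw0.
  case: ifP => [_|]; first by rewrite mulr1.
  by move/negbT; rewrite -leNgt => ej; rewrite ew ?mulr0 //; apply/le_anti; rewrite ej e0.
have lF := quot_lim (ln_derive hF PF1) (etrans (congr1 (@ln R) PF1) (@ln1 R)).
have lG := quot_lim (ln_derive hG PG1) (etrans (congr1 (@ln R) PG1) (@ln1 R)).
have cH : (@ln R \o PH) @ (1 : R)^' --> (@ln R \o PH) 1.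
  apply: cvg_within_filter; apply: differentiable_continuous.
  by apply/derivable1_diffP; case: (ln_derive hH PH1).
have cid1 : (fun a : R => a) @ (1 : R)^' --> (1 : R).
  by apply: cvg_within_filter; exact: cvg_id.
have := cvgD (cvgD (cvgN (cvgM cid1 lG)) lF) cH.
rewrite /= PH1 ln1 addr0 mul1r.
set LG := \sum_j w j * _; set LF := \sum_j 1 * _.
have -> : LF = \sum_i d i * lg (d i).
  apply: eq_bigr => i _; rewrite subr0 mul1r pw1 // mulrC //.
have -> : LG = \sum_j w j * lg (e j).
  apply: eq_bigr => j _; rewrite subrr pw0; case: ifP => ej; first by rewrite mulr1.
  by rewrite /lg ej !mulr0.
move=> L.
have {}L := L (dnbhs_filter _) (dnbhs_filter _) (dnbhs_filter _) (dnbhs_filter _).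
rewrite [X in _ --> X]addrC; apply: (cvg_trans _ L); apply: near_eq_cvg; near=> a.
rewrite !fctE /=.
have -> : \sum_(i < n) 1 * pw (a - 0) (d i) = \sum_(i < n) pw a (d i).
  by apply: eq_bigr => i _; rewrite subr0 mul1r.
have -> : PH a = \sum_(i < n) pw a (e i).
  by apply: eq_bigr => i _; rewrite subr0 mul1r.
have h : (1 - a)^-1 = - (a - 1)^-1 by rewrite -opprB invrN.
rewrite /GRing.scale /= h; set q := (a - 1)^-1.
set X := ln _; set Y := ln _; set Z := ln _.
ring.
Unshelve. all: by end_near. Qed.


Lemma ReB (x y : C) : complex.Re (x - y) = complex.Re x - complex.Re y.
Proof. by case: x; case: y. Qed.

Lemma trRB n (A B : 'M[C]_n) : trR (A - B) = trR A - trR B.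
Proof. by rewrite /trR linearB /= ReB. Qed.

End Helpers.

Local Open Scope classical_set_scope.

Theorem lemma8 (R : realType) (n : nat) (rho sigma : 'M[R[i]]_n) :
  density rho -> density sigma ->
  (Salpha a rho sigma @[a --> (1 : R)^'] --> Umegaki rho sigma)%classic.
Proof.
move=> drho dsig; rewrite /Salpha /Umegaki; case: ifP => supp; last exact: cvg_cst.
have [[U d] [eU mU]] := mfunE (density_eigdec drho).
have [[V e] [eV mV]] := mfunE (density_eigdec dsig).
have UU : U *m adj U = 1%:M by case: eU.
have VV : V *m adj V = 1%:M by case: eV.
have dU := eig_diag eU; have dV := eig_diag eV.
pose w j := complex.Re ((adj V *m rho *m V) j j).
have d0 : forall i, 0 <= d 0 i.
  move=> i; have := psd_entry U i drho; rewrite dU /Dg !mxE eqxx mulr1n.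
  by rewrite -(@lecR R).
have e0 : forall i, 0 <= e 0 i.
  move=> i; have := psd_entry V i dsig; rewrite dV /Dg !mxE eqxx mulr1n.
  by rewrite -(@lecR R).
have [_ _ trho] := drho; have [_ _ tsig] := dsig.
have d1 : \sum_i d 0 i = 1.
  have := tr_mfun d id UU; case: eU => _ <-; rewrite /trR trho => <-; done.
have e1 : \sum_i e 0 i = 1.
  have := tr_mfun e id VV; case: eV => _ <-; rewrite /trR tsig => <-; done.
have w1 : \sum_j w j = 1.
  rewrite /w -Re_sum -/(mxtrace _) mxtrace_mulC mulmxA VV mul1mx trho; done.
have ew : forall j, e 0 j = 0 -> w j = 0.
  by move=> j ej; rewrite /w (supp_zero supp eV ej).
have L := real_limit d0 d1 e0 e1 w1 ew.
apply/fine_cvgP; split; first by near=> a.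
have -> : trR (rho *m mlog rho - rho *m mlog sigma) =
   \sum_i d 0 i * lg (d 0 i) - \sum_j w j * lg (e 0 j).
  rewrite trRB /mlog mU mV !tr_mul_mfun // dU.
  congr (_ - _); apply: eq_bigr => j _; rewrite /Dg !mxE eqxx mulr1n //.
apply: (cvg_trans _ L); apply: near_eq_cvg; near=> a => /=.
rewrite /mpow !mU !mV /= (tr_mfun d _ UU) (tr_mfun e _ VV) tr_mul_mfun //.
Unshelve. all: by end_near. Qed.
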